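(* For all positive integers $n$ and $k$, \[ 0\le\frac1{n^k}-\frac1{n(n+1)\cdots(n+k-1)}<\frac{k^2}{2n^{k+1}}. \] *)

(* Defs.v *)
From Stdlib Require Import Reals.
Open Scope R_scope.

Fixpoint rising (n k : nat) : R :=
  match k with
  | O => 1
  | S k' => rising n k' * INR (n + k')
  end.

(* Main.v *)
Require Import Defs.
From Stdlib Require Import Reals Lra Lia Psatz.
Open Scope R_scope.

Lemma aux (n k : nat) (hn : (1 <= n)%nat) :
  0 < rising n k /\ INR n ^ k <= rising n k /\
  2 * INR n * (rising n k - INR n ^ k) <= INR k * (INR k - 1) * rising n k.
Proof.
  assert (Hn : 1 <= INR n) by (apply (le_INR 1); lia).
  induction k as [|k [H1 [H2 H3]]].
  - simpl. lra.
  - simpl rising. rewrite S_INR, plus_INR. simpl pow.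
    assert (Hk : 0 <= INR k) by apply pos_INR.
    set (R0 := rising n k) in *. set (N := INR n ^ k) in *.
    assert (HN : 0 < N) by (apply pow_lt; lra).
    split; [|split].
    + nra.
    + nra.
    + assert (A : INR n * (2 * INR n * (R0 - N)) <= INR n * (INR k * (INR k - 1) * R0))
        by (apply Rmult_le_compat_l; lra).
      assert (B : 0 <= INR k * (INR k + 1) * R0 * INR k) by
        (apply Rmult_le_pos; [apply Rmult_le_pos; [apply Rmult_le_pos|]|]; lra).
      nra.
Qed.

Theorem lemma3p8 (n k : nat) (hn : (1 <= n)%nat) (hk : (1 <= k)%nat) :
  0 <= 1 / INR n ^ k - 1 / rising n k /\
  1 / INR n ^ k - 1 / rising n k < INR k ^ 2 / (2 * INR n ^ (k + 1)).
Proof.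
  destruct (aux n k hn) as [H1 [H2 H3]].
  assert (Hn : 1 <= INR n) by (apply (le_INR 1); lia).
  assert (Hk : 1 <= INR k) by (apply (le_INR 1); lia).
  rewrite pow_add, pow_1.
  set (R0 := rising n k) in *. set (N := INR n ^ k) in *.
  assert (HN : 0 < N) by (apply pow_lt; lra).
  assert (E : 1 / N - 1 / R0 = (R0 - N) / (N * R0)) by (field; lra).
  rewrite E. split.
  - unfold Rdiv; apply Rmult_le_pos; [lra| left; apply Rinv_0_lt_compat; nra].
  - assert (E2 : INR k ^ 2 / (2 * (N * INR n)) = (INR k ^ 2 * R0 / (2 * INR n)) / (N * R0))
      by (field; lra).
    rewrite E2. unfold Rdiv. apply Rmult_lt_compat_r.
    + apply Rinv_0_lt_compat; nra.
    + apply (Rmult_lt_reg_r (2 * INR n)); [lra|].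
      rewrite Rmult_assoc, Rinv_l by lra. nra.
Qed.
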